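(* Let $q'>0$, $e'\in(0,1)$, $q_{\max}>0$, $\mathcal D_5=\{(e,\omega):0\le e\le1,\ 0\le\omega\le\pi\}$, $\mathcal D_6=\{(q,\omega'):0<q\le q_{\max},\ 0\le\omega'\le\pi/2\}$. For each $(q,\omega')\in\mathcal D_6$, $$\min_{(e,\omega)\in\mathcal D_5}\delta_{\rm nod}=\max\{0,\ \ell^{\omega'}_{\rm ext}\},\qquad \max_{(e,\omega)\in\mathcal D_5}\delta_{\rm nod}=\max\{u^{\omega'}_{\rm link},\ u^{\omega'}_{\rm ext}\},$$ where $\ell^{\omega'}_{\rm ext}(q,\omega')=q-\frac{p'}{1-e'\cos\omega'}$, $u^{\omega'}_{\rm link}(q,\omega')=\frac{p'}{1-e'\cos\omega'}-q$, and $$u^{\omega'}_{\rm ext}(q,\omega')=\frac{2q}{1+\cos\omega_*}-\frac{p'}{1+e'\cos\omega'},\qquad \cos\omega_*=\frac{p'e'\cos\omega'}{\sqrt{q^2(1-e'^2\cos^2\omega')^2+(p'e'\cos\omega')^2}+q(1-e'^2\cos^2\omega')}.$$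
   Context: For $q>0$, $e\in[0,1]$ and angles $\omega,\omega'$, define $r_{\pm}=\frac{q(1+e)}{1\pm e\cos\omega}$, $r'_{\pm}=\frac{q'(1+e')}{1\pm e'\cos\omega'}$ (extended-real value $+\infty$ allowed when a denominator vanishes), $d^+=r'_+-r_+$, $d^-=r'_--r_-$, and the nodal distance $\delta_{\rm nod}=\min\{|d^+|,|d^-|\}$. $p'=q'(1+e')$. *)

(* Defs.v *)
From Stdlib Require Import Reals.
Open Scope R_scope.

Inductive ER : Type := Fin (x : R) | PInf.

Definition ER_le (a b : ER) : Prop :=
  match a, b with
  | Fin x, Fin y => x <= y
  | _, PInf => True
  | PInf, Fin _ => False
  end.

Definition ER_min (a b : ER) : ER :=
  match a, b with
  | Fin x, Fin y => Fin (Rmin x y)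
  | Fin x, PInf => Fin x
  | PInf, b => b
  end.

Definition rad (q e den : R) : ER :=
  if Req_EM_T den 0 then PInf else Fin (q * (1 + e) / den).

Definition r_plus (q e w : R) : ER := rad q e (1 + e * cos w).
Definition r_minus (q e w : R) : ER := rad q e (1 - e * cos w).

Definition absdiff (a b : ER) : ER :=
  match a, b with
  | Fin x, Fin y => Fin (Rabs (x - y))
  | _, _ => PInf
  end.

Definition delta_nod (q e w q' e' w' : R) : ER :=
  ER_min (absdiff (r_plus q' e' w') (r_plus q e w))
         (absdiff (r_minus q' e' w') (r_minus q e w)).

Definition pp (q' e' : R) : R := q' * (1 + e').

Definition l_ext (q q' e' w' : R) : R := q - pp q' e' / (1 - e' * cos w').
Definition u_link (q q' e' w' : R) : R := pp q' e' / (1 - e' * cos w') - q.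

Definition cos_wstar (q q' e' w' : R) : R :=
  let c := cos w' in
  let A := 1 - e' ^ 2 * c ^ 2 in
  pp q' e' * e' * c /
    (sqrt (q ^ 2 * A ^ 2 + (pp q' e' * e' * c) ^ 2) + q * A).

Definition u_ext (q q' e' w' : R) : R :=
  2 * q / (1 + cos_wstar q q' e' w') - pp q' e' / (1 + e' * cos w').

Definition inD5 (e w : R) : Prop := 0 <= e <= 1 /\ 0 <= w <= PI.

(* Main.v *)
Require Import Defs.
From Stdlib Require Import Reals Lra Psatz.
Open Scope R_scope.

Lemma cs_props (q P e c : R) : 0 < q -> 0 < P -> 0 < e < 1 -> 0 <= c <= 1 ->
  0 <= (P * e * c) / (sqrt (q ^ 2 * (1 - e ^ 2 * c ^ 2) ^ 2 + (P * e * c) ^ 2) + q * (1 - e ^ 2 * c ^ 2)) < 1 /\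
  (P * e * c) * ((P * e * c) / (sqrt (q ^ 2 * (1 - e ^ 2 * c ^ 2) ^ 2 + (P * e * c) ^ 2) + q * (1 - e ^ 2 * c ^ 2))) ^ 2
   + 2 * q * (1 - e ^ 2 * c ^ 2) * ((P * e * c) / (sqrt (q ^ 2 * (1 - e ^ 2 * c ^ 2) ^ 2 + (P * e * c) ^ 2) + q * (1 - e ^ 2 * c ^ 2))) - (P * e * c) = 0.
Proof.
  intros Hq HP He Hc.
  set (K := 1 - e ^ 2 * c ^ 2). set (m := P * e * c).
  set (cs := m / (sqrt (q ^ 2 * K ^ 2 + m ^ 2) + q * K)).
  assert (Hec : 0 <= e * c < 1) by (split; nra).
  assert (HK : 0 < K) by (unfold K; replace (e ^ 2 * c ^ 2) with ((e*c)*(e*c)) by ring; nra).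
  assert (Hm : 0 <= m) by (unfold m; assert (0 <= P*e) by nra; nra).
  set (S := sqrt (q ^ 2 * K ^ 2 + m ^ 2)).
  assert (HS0 : 0 <= S) by apply sqrt_pos.
  assert (HS2 : S * S = q ^ 2 * K ^ 2 + m ^ 2) by (apply sqrt_sqrt; nra).
  assert (HqK : 0 < q * K) by nra.
  assert (HSm : m <= S) by nra.
  assert (HSq : q * K <= S) by nra.
  assert (Hd : 0 < S + q * K) by lra.
  split.
  - unfold cs; fold S. split.
    + unfold Rdiv; apply Rmult_le_pos; [lra| apply Rlt_le, Rinv_0_lt_compat; lra].
    + apply Rmult_lt_reg_r with (S + q*K); [lra|].
      unfold Rdiv; rewrite Rmult_assoc, Rinv_l by lra. lra.
  - fold S in cs. set (D := S + q * K) in *.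
    assert (Hcs : cs * D = m) by (unfold cs; field; lra).
    apply Rmult_eq_reg_r with (D ^ 2); [|apply pow_nonzero; lra].
    replace ((m * cs ^ 2 + 2 * q * K * cs - m) * D ^ 2) with
      (m * (cs * D) ^ 2 + 2 * q * K * (cs * D) * D - m * D ^ 2) by ring.
    rewrite Hcs. unfold D. nra.
Qed.
Ltac dst := unfold Rmin, Rmax, Rabs in *; repeat (match goal with
  | |- context [Rcase_abs ?x] => destruct (Rcase_abs x)
  | |- context [Rle_dec ?x ?y] => destruct (Rle_dec x y) end).

Lemma core (q A B R1 R2 R1s R2s : R) : 0 < q -> A <= B -> q < R1s -> q < R2s ->
  (R1s - q) * (R2s - q) = q ^ 2 -> R1s - A = R2s - B -> q <= R1 -> q <= R2 ->
  (R1 - q) * (R2 - q) <= q ^ 2 ->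
  Rmin (Rabs (A - R1)) (Rabs (B - R2)) <= Rmax (B - q) (R1s - A).
Proof.
  intros Hq HAB H1 H2 Hs HT HR1 HR2 Hc.
  destruct (Rle_lt_dec R1 A) as [a|a].
  { apply Rle_trans with (Rabs (A - R1)); [apply Rmin_l|].
    apply Rle_trans with (B - q); [|apply Rmax_l]. rewrite Rabs_pos_eq; lra. }
  destruct (Rle_lt_dec R2 B) as [b|b].
  { apply Rle_trans with (Rabs (B - R2)); [apply Rmin_r|].
    apply Rle_trans with (B - q); [|apply Rmax_l]. rewrite Rabs_pos_eq; lra. }
  rewrite (Rabs_left (A - R1)) by lra. rewrite (Rabs_left (B - R2)) by lra.
  apply Rle_trans with (R1s - A); [|apply Rmax_r].
  destruct (Rle_lt_dec (Rmin (- (A - R1)) (- (B - R2))) (R1s - A)) as [c|c]; [exact c|].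
  exfalso.
  assert (c1 : R1s < R1) by (pose proof (Rmin_l (- (A - R1)) (- (B - R2))); lra).
  assert (c2 : R2s < R2) by (pose proof (Rmin_r (- (A - R1)) (- (B - R2))); lra).
  assert (0 < R1s - q) by lra. assert (0 < R2s - q) by lra.
  assert ((R1s - q) * (R2s - q) < (R1 - q) * (R2 - q)) by nra. lra.
Qed.

Lemma Rabs_maj2 (x : R) : - x <= Rabs x.
Proof. rewrite <- Rabs_Ropp. apply Rle_abs. Qed.

Lemma rad_fin (q e d : R) : d <> 0 -> rad q e d = Fin (q * (1 + e) / d).
Proof. intros H; unfold rad; destruct (Req_EM_T d 0); [contradiction|reflexivity]. Qed.
Lemma rad_inf (q e d : R) : d = 0 -> rad q e d = PInf.
Proof. intros H; unfold rad; destruct (Req_EM_T d 0); [reflexivity|contradiction]. Qed.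

Theorem proposition5 (q' e' qmax q w' : R) :
  0 < q' -> 0 < e' < 1 -> 0 < qmax ->
  0 < q <= qmax -> 0 <= w' <= PI / 2 ->
  (* minimum over D5 *)
  ((exists e w, inD5 e w /\
      delta_nod q e w q' e' w' = Fin (Rmax 0 (l_ext q q' e' w'))) /\
   (forall e w, inD5 e w ->
      ER_le (Fin (Rmax 0 (l_ext q q' e' w'))) (delta_nod q e w q' e' w'))) /\
  (* maximum over D5 *)
  ((exists e w, inD5 e w /\
      delta_nod q e w q' e' w' =
        Fin (Rmax (u_link q q' e' w') (u_ext q q' e' w'))) /\
   (forall e w, inD5 e w ->
      ER_le (delta_nod q e w q' e' w')
            (Fin (Rmax (u_link q q' e' w') (u_ext q q' e' w'))))).
Proof.
  intros Hq' He' Hqm [Hq _] Hw'.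
  pose proof PI_RGT_0 as HPI.
  assert (Hc : 0 <= cos w' <= 1) by (split; [apply cos_ge_0; lra | apply COS_bound]).
  set (c := cos w') in *.
  set (P := pp q' e').
  assert (HP : 0 < P) by (unfold P, pp; nra).
  set (k := e' * c).
  assert (Hk : 0 <= k < 1) by (unfold k; split; nra).
  set (A := P / (1 + k)). set (B := P / (1 - k)).
  assert (HA : 0 < A) by (unfold A; apply Rdiv_lt_0_compat; lra).
  assert (HAB : A <= B).
  { unfold A, B. unfold Rdiv. apply Rmult_le_compat_l; [lra|].
    apply Rinv_le_contravar; lra. }
  assert (Hrp : r_plus q' e' w' = Fin A).
  { unfold r_plus; rewrite rad_fin; [reflexivity| fold c; fold k; lra]. }
  assert (Hrm : r_minus q' e' w' = Fin B).
  { unfold r_minus; rewrite rad_fin; [reflexivity| fold c; fold k; lra]. }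
  assert (Hl : l_ext q q' e' w' = q - B) by reflexivity.
  assert (Hu : u_link q q' e' w' = B - q) by reflexivity.
  set (cs := cos_wstar q q' e' w').
  destruct (cs_props q P e' c Hq HP He' Hc) as [Hcs Heq].
  assert (Ecs : cs = P * e' * c / (sqrt (q ^ 2 * (1 - e' ^ 2 * c ^ 2) ^ 2 + (P * e' * c) ^ 2) + q * (1 - e' ^ 2 * c ^ 2))) by reflexivity.
  rewrite <- Ecs in Heq, Hcs.
  set (R1s := 2 * q / (1 + cs)). set (R2s := 2 * q / (1 - cs)).
  assert (HT : u_ext q q' e' w' = R1s - A) by reflexivity.
  rewrite Hl, Hu, HT.
  assert (HT2 : R1s - A = R2s - B).
  { assert (Heq' : P * k * cs ^ 2 + 2 * q * (1 - k ^ 2) * cs - P * k = 0) by (unfold k; rewrite <- Heq; ring).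
    assert (E : R1s - A - (R2s - B) = -2 * (P * k * cs ^ 2 + 2 * q * (1 - k ^ 2) * cs - P * k) / ((1 - cs ^ 2) * (1 - k ^ 2))).
    { unfold R1s, R2s, A, B. field. repeat split; try lra; nra. }
    rewrite Heq' in E. unfold Rdiv in E. rewrite Rmult_0_r, Rmult_0_l in E. lra. }
  assert (H1s : q < R1s).
  { assert (R1s - q = q * (1 - cs) / (1 + cs)) by (unfold R1s; field; lra).
    assert (0 < q * (1 - cs) / (1 + cs)) by (apply Rdiv_lt_0_compat; nra). lra. }
  assert (H2s : q < R2s).
  { assert (R2s - q = q * (1 + cs) / (1 - cs)) by (unfold R2s; field; lra).
    assert (0 < q * (1 + cs) / (1 - cs)) by (apply Rdiv_lt_0_compat; nra). lra. }
  assert (Hss : (R1s - q) * (R2s - q) = q ^ 2) by (unfold R1s, R2s; field; lra).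
  assert (Gen : forall e w, inD5 e w ->
    (1 + e * cos w = 0 /\ rad q e (1 + e * cos w) = PInf /\ rad q e (1 - e * cos w) = Fin q) \/
    (1 - e * cos w = 0 /\ rad q e (1 - e * cos w) = PInf /\ rad q e (1 + e * cos w) = Fin q) \/
    (exists R1 R2, rad q e (1 + e * cos w) = Fin R1 /\ rad q e (1 - e * cos w) = Fin R2 /\
       q <= R1 /\ q <= R2 /\ (R1 - q) * (R2 - q) <= q ^ 2)).
  { intros e w [[He0 He1] _].
    pose proof (COS_bound w) as Hb.
    set (x := e * cos w).
    assert (Hx : - e <= x <= e) by (unfold x; split; nra).
    destruct (Req_EM_T (1 + x) 0) as [d1|d1].
    { left. split; [exact d1|]. split; [apply rad_inf; exact d1|].
      rewrite rad_fin by lra. f_equal.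
      replace (1 - x) with 2 by lra. replace e with 1 by lra. field. }
    destruct (Req_EM_T (1 - x) 0) as [d2|d2].
    { right; left. split; [exact d2|]. split; [apply rad_inf; exact d2|].
      rewrite rad_fin by lra. f_equal.
      replace (1 + x) with 2 by lra. replace e with 1 by lra. field. }
    right; right. exists (q * (1 + e) / (1 + x)), (q * (1 + e) / (1 - x)).
    rewrite !rad_fin by lra. split; [reflexivity|]. split; [reflexivity|].
    assert (0 < 1 + x) by lra. assert (0 < 1 - x) by lra.
    split.
    { assert (q * (1 + e) / (1 + x) - q = q * (e - x) / (1 + x)) by (field; lra).
      assert (0 <= q * (e - x) / (1 + x)) by (unfold Rdiv; apply Rmult_le_pos; [nra|left; apply Rinv_0_lt_compat; lra]). lra. }
    split.
    { assert (q * (1 + e) / (1 - x) - q = q * (e + x) / (1 - x)) by (field; lra).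
      assert (0 <= q * (e + x) / (1 - x)) by (unfold Rdiv; apply Rmult_le_pos; [nra|left; apply Rinv_0_lt_compat; lra]). lra. }
    assert (E : q ^ 2 - (q * (1 + e) / (1 + x) - q) * (q * (1 + e) / (1 - x) - q) = q * (1 + e) * (2 * q - q * (1 + e)) / ((1 + x) * (1 - x))) by (field; lra).
    assert (0 <= q * (1 + e) * (2 * q - q * (1 + e)) / ((1 + x) * (1 - x))).
    { unfold Rdiv; apply Rmult_le_pos.
      - replace (q * (1 + e) * (2 * q - q * (1 + e))) with ((q * q) * ((1 + e) * (1 - e))) by ring.
        apply Rmult_le_pos; nra.
      - left; apply Rinv_0_lt_compat; nra. }
    lra. }
  split; split.
  -
    destruct (Rle_lt_dec B q) as [h|h].
    + exists 0, 0. split; [unfold inD5; lra|].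
      unfold delta_nod; rewrite Hrp, Hrm; unfold r_plus, r_minus; rewrite cos_0, !rad_fin by lra.
      simpl. f_equal.
      replace (q * (1 + 0) / (1 + 0 * 1)) with q by field.
      replace (q * (1 + 0) / (1 - 0 * 1)) with q by field.
      rewrite Rmax_right by lra. rewrite !Rabs_left1 by lra.
      rewrite Rmin_right by lra. ring.
    + exists ((B - q) / (B + q)), 0.
      assert (0 <= (B - q) / (B + q) < 1).
      { split. unfold Rdiv; apply Rmult_le_pos; [lra| left; apply Rinv_0_lt_compat; lra].
        apply Rmult_lt_reg_r with (B + q); [lra|]. unfold Rdiv.
        rewrite Rmult_assoc, Rinv_l by lra. lra. }
      split; [unfold inD5; lra|].
      unfold delta_nod; rewrite Hrp, Hrm; unfold r_plus, r_minus; rewrite cos_0, !rad_fin by lra.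
      simpl. f_equal.
      replace (q * (1 + (B - q) / (B + q)) / (1 - (B - q) / (B + q) * 1)) with B by (field; lra).
      rewrite Rmax_left by lra. rewrite Rminus_diag, Rabs_R0.
      apply Rmin_right. apply Rabs_pos.
  -
    intros e w HD.
    unfold delta_nod; rewrite Hrp, Hrm; unfold r_plus, r_minus.
    destruct (Gen e w HD) as [[_ [E1 E2]]|[[_ [E1 E2]]|[R1 [R2 [E1 [E2 [h1 [h2 h3]]]]]]]];
      rewrite E1, E2; simpl.
    + apply Rmax_lub. apply Rabs_pos. pose proof (Rabs_maj2 (B - q)). lra.
    + apply Rmax_lub. apply Rabs_pos. pose proof (Rabs_maj2 (A - q)). lra.
    + apply Rmax_lub. apply Rmin_glb; apply Rabs_pos.
      pose proof (Rabs_maj2 (A - R1)). pose proof (Rabs_maj2 (B - R2)).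
      apply Rmin_glb; lra.
  -
    destruct (Rle_lt_dec (R1s - A) (B - q)) as [h|h].
    + exists 1, PI. split; [unfold inD5; lra|].
      unfold delta_nod; rewrite Hrp, Hrm; unfold r_plus, r_minus; rewrite cos_PI.
      rewrite rad_inf by lra. rewrite rad_fin by lra. simpl. f_equal.
      replace (q * (1 + 1) / (1 - 1 * -1)) with q by field.
      rewrite Rmax_left by lra. apply Rabs_pos_eq. lra.
    + exists 1, (acos cs). split; [unfold inD5; split; [lra| apply acos_bound]|].
      unfold delta_nod; rewrite Hrp, Hrm; unfold r_plus, r_minus; rewrite cos_acos by lra.
      rewrite !rad_fin by lra. simpl. f_equal.
      replace (q * (1 + 1) / (1 + 1 * cs)) with R1s by (unfold R1s; field; lra).
      replace (q * (1 + 1) / (1 - 1 * cs)) with R2s by (unfold R2s; field; lra).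
      rewrite Rmax_right by lra.
      rewrite !Rabs_left1 by lra. rewrite Rmin_left by lra. ring.
  -
    intros e w HD.
    unfold delta_nod; rewrite Hrp, Hrm; unfold r_plus, r_minus.
    destruct (Gen e w HD) as [[_ [E1 E2]]|[[_ [E1 E2]]|[R1 [R2 [E1 [E2 [h1 [h2 h3]]]]]]]];
      rewrite E1, E2; simpl.
    + destruct (Rle_lt_dec q B).
      * rewrite Rabs_pos_eq by lra. apply Rmax_l.
      * rewrite Rabs_left by lra. apply Rle_trans with (R1s - A); [lra|apply Rmax_r].
    + destruct (Rle_lt_dec q A).
      * rewrite Rabs_pos_eq by lra. apply Rle_trans with (B - q); [lra|apply Rmax_l].
      * rewrite Rabs_left by lra. apply Rle_trans with (R1s - A); [lra|apply Rmax_r].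
    + apply (core q A B R1 R2 R1s R2s); auto.
Qed.
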